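(* Let $(X,\sigma)$ be a one-sided or two-sided subshift over a finite alphabet which has a forward Li-Yorke pair $x,y$. Then there exists $f\in E(X,\mathbb{Z}^+)$ such that $f(x)\neq f(y)$ but $f(x)$ and $f(y)$ are forward asymptotic. In particular, $f$ is not injective on its image and therefore $f$ is not a completely regular element of $X^X$.
   Context: For a finite alphabet $\mathcal A$, a one-sided (resp. two-sided) subshift is a closed subset $X\subset\mathcal A^{\mathbb{Z}^+}$ (resp. $\mathcal A^{\mathbb{Z}}$), product topology, invariant under the left shift $\sigma(x)_n=x_{n+1}$, with $\sigma$ restricted to $X$. $E(X,\mathbb{Z}^+)$ is the closure of $\{\sigma^n:n\ge0\}$ in $X^X$ (pointwise convergence topology, composition). Fix a compatible metric $d$. A pair is forward asymptotic if $\lim_{n\to+\infty}d(\sigma^nx,\sigma^ny)=0$, forward proximal if $\inf_{n\ge0}d(\sigma^nx,\sigma^ny)=0$, and a forward Li-Yorke pair if forward proximal but not forward asymptotic. An element $f$ of a semigroup is completely regular if there exists $g$ in it with $f=fgf$ and $fg=gf$. *)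

(* Defs.v *)
From mathcomp Require Import all_boot all_order all_algebra.
From Stdlib Require List.
Set Implicit Arguments. Unset Strict Implicit. Unset Printing Implicit Defensive.
Import Order.TTheory GRing.Theory Num.Theory.

Inductive sided := OneSided | TwoSided.

Definition idx (s : sided) : Type :=
  match s with OneSided => nat | TwoSided => int end.

Definition succ_idx (s : sided) : idx s -> idx s :=
  match s return idx s -> idx s with
  | OneSided => fun k : nat => k.+1
  | TwoSided => fun k : int => (k + 1)%R
  end.

Definition in_win (s : sided) (N : nat) : idx s -> bool :=
  match s return idx s -> bool with
  | OneSided => fun k : nat => (k <= N)%N
  | TwoSided => fun k : int => (`|k| <= N%:Z)%R
  end.

Definition pt (s : sided) (A : finType) := idx s -> A.

Definition shift (s : sided) (A : finType) (x : pt s A) : pt s A :=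
  fun k => x (@succ_idx s k).

(* x and y agree on the window of radius N (basic cylinder neighbourhood) *)
Definition agree (s : sided) (A : finType) (N : nat) (x y : pt s A) : Prop :=
  forall k : idx s, @in_win s N k -> x k = y k.

(* X is closed in the product topology (A discrete) *)
Definition closed_set (s : sided) (A : finType) (X : pt s A -> Prop) : Prop :=
  forall x : pt s A, (forall N : nat, exists y, X y /\ agree N x y) -> X x.

Definition subshift (s : sided) (A : finType) (X : pt s A -> Prop) : Prop :=
  closed_set X /\ (forall x, X x -> X (shift x)).

(* forward asymptotic: d(sigma^n x, sigma^n y) -> 0 *)
Definition fwd_asymptotic (s : sided) (A : finType) (x y : pt s A) : Prop :=
  forall N : nat, exists M : nat, forall n : nat, (M <= n)%N ->
    agree N (iter n (@shift s A) x) (iter n (@shift s A) y).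

(* forward proximal: inf_{n >= 0} d(sigma^n x, sigma^n y) = 0 *)
Definition fwd_proximal (s : sided) (A : finType) (x y : pt s A) : Prop :=
  forall N : nat, exists n : nat,
    agree N (iter n (@shift s A) x) (iter n (@shift s A) y).

Definition fwd_LiYorke (s : sided) (A : finType) (x y : pt s A) : Prop :=
  fwd_proximal x y /\ ~ fwd_asymptotic x y.

(* f (viewed as a self-map of X, only its values on X matter) lies in the
   closure of {sigma^n : n >= 0} in X^X for the topology of pointwise
   convergence: every basic neighbourhood of f (finitely many points of X,
   a window radius N) contains some sigma^n. *)
Definition in_Ellis (s : sided) (A : finType) (X : pt s A -> Prop)
    (f : pt s A -> pt s A) : Prop :=
  forall (F : list (pt s A)), (forall x, List.In x F -> X x) ->
  forall N : nat, exists n : nat,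
    forall x, List.In x F -> agree N (f x) (iter n (@shift s A) x).

(* f restricted to its image f(X) is not injective *)
Definition not_injective_on_image (s : sided) (A : finType) (X : pt s A -> Prop)
    (f : pt s A -> pt s A) : Prop :=
  exists a b : pt s A, X a /\ X b /\ f a <> f b /\ f (f a) = f (f b).

Definition completely_regular (s : sided) (A : finType) (X : pt s A -> Prop)
    (f : pt s A -> pt s A) : Prop :=
  exists g : pt s A -> pt s A,
    (forall x, X x -> X (g x)) /\
    (forall x, X x -> f x = f (g (f x))) /\
    (forall x, X x -> f (g x) = g (f x)).

(* Main.v *)
Require Import Defs.
From mathcomp Require Import all_boot all_order all_algebra.
From mathcomp Require Import boolp classical_sets filter.
From mathcomp Require Import zify.
From Stdlib Require Import Classical ClassicalEpsilon FunctionalExtensionality.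
From Stdlib Require List.
Set Implicit Arguments. Unset Strict Implicit. Unset Printing Implicit Defensive.
Import Order.TTheory GRing.Theory Num.Theory.

Record UF (G : (nat -> Prop) -> Prop) := {
  uf_mono : forall P Q : nat -> Prop, G P -> (forall n, P n -> Q n) -> G Q;
  uf_and : forall P Q : nat -> Prop, G P -> G Q -> G (fun n => P n /\ Q n);
  uf_ne : forall P : nat -> Prop, G P -> exists n, P n;
  uf_ult : forall P : nat -> Prop, G P \/ G (fun n => ~ P n);
  uf_tail : forall K, G (fun n => (K <= n)%N) }.

Lemma UF_exists : exists G, UF G.
Proof.
have [G [GU sFG]] := ultraFilterLemma (@eventually_filter).
exists G; split.
- move=> P Q GP PQ; exact: (filterS PQ GP).
- move=> P Q GP GQ; exact: (filterI GP GQ).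
- move=> P GP; apply: contrapT => nP; apply: (filter_not_empty G).
  have -> : (set0 : set nat) = P; last by [].
  by rewrite predeqE => n; split => // Pn; apply: nP; exists n.
- move=> P; exact: (in_ultra_setVsetC P GU).
- move=> K; apply: sFG; exists K => //.
Qed.

Lemma G_all (T : Type) (G : (nat -> Prop) -> Prop) (UG : UF G) (l : list T)
  (P : T -> nat -> Prop) :
  (forall t, List.In t l -> G (P t)) -> G (fun L => forall t, List.In t l -> P t L).
Proof.
elim: l => [|a l IH] H.
  by apply: (uf_mono UG (uf_tail UG 0)) => n _ t [].
have GI := IH (fun t tl => H t (or_intror tl)).
apply: (uf_mono UG (uf_and UG (H a (or_introl erefl)) GI)).
by move=> n [h1 h2] t [<-|tl] //; apply: h2.
Qed.

Definition addn_idx (s : sided) : idx s -> nat -> idx s :=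
  match s return idx s -> nat -> idx s with
  | OneSided => fun (k : nat) n => (k + n)%N
  | TwoSided => fun (k : int) n => (k + Posz n)%R end.
Definition zero_idx (s : sided) : idx s :=
  match s return idx s with OneSided => 0%N | TwoSided => 0%R end.
Definition toZ (s : sided) : idx s -> int :=
  match s return idx s -> int with
  | OneSided => fun k : nat => Posz k | TwoSided => fun k : int => k end.

Lemma addn_succ s (k : idx s) n : addn_idx (succ_idx k) n = addn_idx k n.+1.
Proof. by case: s k => k /=; lia. Qed.

Lemma iter_shift s (A : finType) n (z : pt s A) k :
  iter n (@shift s A) z k = z (addn_idx k n).
Proof.
elim: n k => [|n IH] k /=.
  by congr z; case: s z k => z k /=; lia.
by rewrite /shift IH addn_succ.
Qed.

Lemma toZ_add s (k : idx s) n : toZ (addn_idx k n) = (toZ k + Posz n)%R.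
Proof. by case: s k => k /=; lia. Qed.

Lemma toZ_inj s (k k' : idx s) : toZ k = toZ k' -> k = k'.
Proof. by case: s k k' => k k' /=; lia. Qed.

Lemma toZ_zero s : toZ (zero_idx s) = 0%R.
Proof. by case: s. Qed.

Lemma win_low s N (k : idx s) : in_win N k -> (- Posz N <= toZ k)%R.
Proof. by case: s k => k /=; lia. Qed.

Lemma win_pos s N i : (i <= N)%N -> in_win N (addn_idx (zero_idx s) i).
Proof. by case: s => /=; lia. Qed.

Lemma win_list s N : exists l : list (idx s), forall k, in_win N k -> List.In k l.
Proof.
case: s.
  exists (List.seq 0 N.+1) => k hk; apply (proj2 (List.in_seq N.+1 0 k)); simpl in hk; lia.
exists (List.map (fun i => (Posz i - Posz N)%R) (List.seq 0 N.*2.+1)) => k hk; simpl in hk.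
apply (proj2 (List.in_map_iff _ _ _)); exists (absz (k + Posz N)%R); split; first by lia.
apply (proj2 (List.in_seq N.*2.+1 0 _)); lia.
Qed.

Theorem lemma4p10 (s : sided) (A : finType) (X : pt s A -> Prop)
  (x y : pt s A) :
  subshift X -> X x -> X y -> fwd_LiYorke x y ->
  exists f : pt s A -> pt s A,
    in_Ellis X f /\ f x <> f y /\ fwd_asymptotic (f x) (f y) /\
    not_injective_on_image X f /\ ~ completely_regular X f.
Proof.
move=> [clX shX] Xx Xy [prox nasy].
pose dif := fun j : nat =>
  x (addn_idx (zero_idx s) j) != y (addn_idx (zero_idx s) j).
have Ha : forall L, exists j, (L <= j)%N /\ dif j.
  move=> L.
  have [N HN] : exists N, forall M, exists n, (M <= n)%N /\
      ~ agree N (iter n (@shift s A) x) (iter n (@shift s A) y).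
    apply: NNPP => H; apply: nasy => N; apply: NNPP => H2; apply: H.
    exists N => M; apply: NNPP => H3; apply: H2; exists M => n Mn.
    by apply: NNPP => H4; apply: H3; exists n; split.
  have [n [Mn nag]] := HN (L + N)%N.
  have [k [wk dk]] : exists k, in_win N k /\ x (addn_idx k n) <> y (addn_idx k n).
    apply: NNPP => H; apply: nag => k wk; rewrite !iter_shift.
    by apply: NNPP => H'; apply: H; exists k; split.
  have lo := win_low wk; have e := toZ_add k n.
  exists (absz (toZ (addn_idx k n))); split; first by lia.
  rewrite /dif.
  have -> : addn_idx (zero_idx s) (absz (toZ (addn_idx k n))) = addn_idx k n.
    by apply: toZ_inj; rewrite toZ_add toZ_zero; lia.
  by apply/eqP.
have Hb : forall L', exists n, forall i, (i <= L')%N -> ~~ dif (n + i)%N.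
  move=> L'; have [n Hn] := prox L'; exists n => i iL.
  have := Hn _ (win_pos s iL); rewrite !iter_shift.
  have -> : addn_idx (addn_idx (zero_idx s) i) n = addn_idx (zero_idx s) (n + i).
    by apply: toZ_inj; rewrite !toZ_add toZ_zero; lia.
  by move=> e; rewrite /dif e eqxx.
have Hc : forall L, exists p, [/\ (L <= p)%N, dif p &
    forall j, (p < j <= p + L)%N -> ~~ dif j].
  move=> L; have [d [Ld dd]] := Ha L; have [n Hn] := Hb (d + L)%N.
  have dn : (d < n)%N.
    rewrite ltnNge; apply/negP => nd.
    have h := Hn (d - n)%N; rewrite subnKC // dd in h.
    by have := h ltac:(lia).
  have exP : exists j, dif j && (j < n)%N by exists d; rewrite dd dn.
  have bnd : forall j, dif j && (j < n)%N -> (j <= n)%N.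
    by move=> j /andP[_ /ltnW].
  case: (ex_maxnP exP bnd) => p /andP[dp pn] pmax.
  exists p; split => //.
    by apply: leq_trans Ld _; apply: pmax; rewrite dd dn.
  move=> j /andP[pj jp]; case: (ltnP j n) => jn.
    apply/negP => dj; have := pmax j; rewrite dj jn => /(_ isT) h.
    by rewrite ltnNge h in pj.
  have := Hn (j - n)%N; rewrite subnKC //; apply; lia.
have [q qP] : exists q : nat -> nat, forall L, [/\ (L <= q L)%N, dif (q L) &
    forall j, (q L < j <= q L + L)%N -> ~~ dif j].
  exists (fun L => proj1_sig (constructive_indefinite_description _ (Hc L))).
  by move=> L; exact: (proj2_sig (constructive_indefinite_description _ (Hc L))).
have [G UG] := UF_exists.
have Hfin : forall u : nat -> A, exists a, G (fun L => u L = a).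
  move=> u.
  suff H : forall l : seq A, G (fun L => u L \in l) -> exists a, G (fun L => u L = a).
    apply: H (index_enum A) _.
    by apply: (uf_mono UG (uf_tail UG 0)) => n _; rewrite mem_index_enum.
  elim => [|a l IH] Gl.
    by have [n] := uf_ne UG Gl; rewrite in_nil.
  case: (uf_ult UG (fun L => u L = a)) => [Ga|Gna]; first by exists a.
  apply: IH; apply: (uf_mono UG (uf_and UG Gl Gna)) => n [h1 h2].
  by move: h1; rewrite in_cons => /orP[/eqP e|//].
have Huniq : forall (u : nat -> A) a b,
    G (fun L => u L = a) -> G (fun L => u L = b) -> a = b.
  by move=> u a b Ga Gb; have [n [<- <-]] := uf_ne UG (uf_and UG Ga Gb).
have [lim limP] : exists lim : (nat -> A) -> A,
    forall u, G (fun L => u L = lim u).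
  exists (fun u => proj1_sig (constructive_indefinite_description _ (Hfin u))).
  by move=> u; exact: (proj2_sig (constructive_indefinite_description _ (Hfin u))).
have limE : forall u a, G (fun L => u L = a) -> lim u = a.
  by move=> u a Ga; exact: Huniq (limP u) Ga.
have limC : forall u v, G (fun L => u L = v L) -> lim u = lim v.
  move=> u v Guv; apply: limE.
  by apply: (uf_mono UG (uf_and UG Guv (limP v))) => n [e1 e2]; rewrite e1 e2.
pose f := fun (z : pt s A) (k : idx s) => lim (fun L => z (addn_idx k (q L))).
have f0 : f x (zero_idx s) <> f y (zero_idx s).
  move=> e.
  have Gx := limP (fun L => x (addn_idx (zero_idx s) (q L))).
  have Gy := limP (fun L => y (addn_idx (zero_idx s) (q L))).
  have [n [e1 e2]] := uf_ne UG (uf_and UG Gx Gy).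
  have [_ dq _] := qP n.
  by move: dq e; rewrite /dif /f e1 e2 => /eqP dq e; apply: dq.
have fk : forall k, (0 < toZ k)%R -> f x k = f y k.
  move=> k hk; apply: limC.
  apply: (uf_mono UG (uf_tail UG (absz (toZ k)))) => L hL.
  have [hLp dp hp] := qP L.
  have -> : addn_idx k (q L) = addn_idx (zero_idx s) (q L + absz (toZ k)).
    by apply: toZ_inj; rewrite !toZ_add toZ_zero; lia.
  have := hp (q L + absz (toZ k))%N ltac:(lia).
  by rewrite /dif negbK => /eqP.
have asy : fwd_asymptotic (f x) (f y).
  move=> N; exists N.+1 => n Nn k wk; rewrite !iter_shift; apply: fk.
  by rewrite toZ_add; have := win_low wk; lia.
have ffe : f (f x) = f (f y).
  apply: functional_extensionality => k; apply: limC.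
  apply: (uf_mono UG (uf_tail UG (absz (toZ k)).+1)) => L hL; apply: fk.
  by rewrite toZ_add; have [hLp _ _] := qP L; lia.
have Ell : in_Ellis X f.
  move=> F _ N; have [l hl] := win_list s N.
  have GF : G (fun L => forall z, List.In z F -> forall k, List.In k l ->
      z (addn_idx k (q L)) = f z k).
    apply: (G_all UG) => z _; apply: (G_all UG) => k _.
    exact: (limP (fun L => z (addn_idx k (q L)))).
  have [L HL] := uf_ne UG GF.
  exists (q L) => z zF k wk; rewrite iter_shift.
  by symmetry; apply: HL => //; exact: hl.
have iterX : forall n z, X z -> X (iter n (@shift s A) z).
  by elim => [|n IH] z Xz //=; apply: shX; apply: IH.
have fX : forall z, X z -> X (f z).
  move=> z Xz; apply: clX => N.
  have [n Hn] := Ell [:: z] ltac:(by move=> w [<-|[]]) N.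
  exists (iter n (@shift s A) z); split; first exact: iterX.
  exact: Hn (or_introl erefl).
have fxy : f x <> f y by move=> e; apply: f0; rewrite e.
exists f; split => //; split => //; split => //; split.
  by exists x, y.
move=> [g [gX [gf gc]]]; apply: fxy.
rewrite (gf x Xx) (gc _ (fX _ Xx)) ffe.
by rewrite -(gc _ (fX _ Xy)) -(gf y Xy).
Qed.
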